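(* Fix $t\in\{1,\dots,M\}$ and let $z^*\in F(\mathcal{T}_t)$ with $|K_t(z^* )|=1$. Set $$r_t=\min\Big\{d_{sep}(z^*,C_t),\ \frac{d_{sep}(z^*,C_t)+d_{esc}(z^*,C_t)}{2}\Big\}.$$ Then every $z\in B(z^*,r_t)$ satisfies $K_t(z)=K_t(z^* )$.
   Context: Fix reals $W,H>0$, integers $N\ge N_m\ge 2$, and widths $w_i>0$, heights $h_i>0$ for $1\le i\le N_m$. Points of $\mathbb{R}^{2N}$ are written $z=(x,y)$ with $x=(x_1,\dots,x_N)$, $y=(y_1,\dots,y_N)$. For $1\le i\le N_m$ let $B_i^x=\{z: 0\le x_i\le W-w_i\}$, $B_i^y=\{z: 0\le y_i\le H-h_i\}$; for $i\neq j$ let $B_{i,j}=B_i^x\cap B_i^y\cap B_j^x\cap B_j^y$, $O^x_{i,j}=\{z: x_i+w_i\le x_j\}$, $O^y_{i,j}=\{z: y_i+h_i\le y_j\}$. Define the closed convex sets $C_{i,j,\mathsf{L}}=O^x_{i,j}\cap B_{i,j}$, $C_{i,j,\mathsf{R}}=O^x_{j,i}\cap B_{i,j}$, $C_{i,j,\mathsf{B}}=O^y_{i,j}\cap B_{i,j}$, $C_{i,j,\mathsf{A}}=O^y_{j,i}\cap B_{i,j}$ (assumed nonempty) and $C_{i,j}=C_{i,j,\mathsf{L}}\cup C_{i,j,\mathsf{R}}\cup C_{i,j,\mathsf{B}}\cup C_{i,j,\mathsf{A}}$. Enumerate the pairs $1\le i<j\le N_m$ by $t=1,\dots,M$ and write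 $C_t=C_{i,j}$, $C_{t,k}=C_{i,j,k}$. With the Euclidean norm and $\mathrm{d}(z,C)=\inf_{c\in C}\|z-c\|$: $\mathcal{P}_t(z)=\{c\in C_t:\|z-c\|=\mathrm{d}(z,C_t)\}$, $P_{t,k}(z)$ is the unique nearest point of $C_{t,k}$ to $z$; for a fixed $\lambda\in(0,2)$, $\mathcal{T}_t(z)=\{z+\lambda(p-z):p\in\mathcal{P}_t(z)\}$, $F(\mathcal{T}_t)=\{z: z\in\mathcal{T}_t(z)\}$. Active indices: $K_t(z)=\{k\in\{\mathsf{L},\mathsf{R},\mathsf{B},\mathsf{A}\}: P_{t,k}(z)\in\mathcal{P}_t(z)\}$. $d_{esc}(z^*,C_t)=\inf\{\|z-z^*\| : z\notin C_{t,k}\text{ for some }k\in K_t(z^* )\}$; $d_{sep}(z^*,C_t)=\min\{\mathrm{d}(z^*,C_{t,k}) : k\notin K_t(z^* )\}$. $B(z,r)$ is the open Euclidean ball (empty if $r=0$). *)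

(* Defs.v *)
(* R : realType, points of R^(2N) are pairs (x, y)
   of functions 'I_N -> R. *)
From HB Require Import structures.
From mathcomp Require Import all_boot all_order all_algebra.
From mathcomp Require Import all_classical all_reals.
Set Implicit Arguments. Unset Strict Implicit. Unset Printing Implicit Defensive.
Import Order.TTheory GRing.Theory Num.Theory.
Local Open Scope ring_scope.
Local Open Scope classical_set_scope.

(* the four relative positions L (left), R (right), B (below), A (above) *)
Inductive side := sL | sR | sB | sA.

Section Packing.
Variables (R : realType) (N : nat).

Definition pt := (('I_N -> R) * ('I_N -> R))%type.

Definition edist (z c : pt) : R :=
  Num.sqrt (\sum_(i < N) ((z.1 i - c.1 i) ^+ 2 + (z.2 i - c.2 i) ^+ 2)).

Definition dset (z : pt) (C : set pt) : R := inf [set edist z c | c in C].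

Definition oball (z : pt) (r : R) : set pt := [set u | edist z u < r].

Variables (W H : R) (w h : 'I_N -> R).

Definition Bx (i : 'I_N) : set pt := [set z | 0 <= z.1 i <= W - w i].
Definition By (i : 'I_N) : set pt := [set z | 0 <= z.2 i <= H - h i].
Definition Bij (i j : 'I_N) : set pt := Bx i `&` By i `&` Bx j `&` By j.
Definition Ox (i j : 'I_N) : set pt := [set z | z.1 i + w i <= z.1 j].
Definition Oy (i j : 'I_N) : set pt := [set z | z.2 i + h i <= z.2 j].

Definition Csub (i j : 'I_N) (k : side) : set pt :=
  match k with
  | sL => Ox i j `&` Bij i j
  | sR => Ox j i `&` Bij i j
  | sB => Oy i j `&` Bij i j
  | sA => Oy j i `&` Bij i j
  end.

Definition Cpair (i j : 'I_N) : set pt :=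
  Csub i j sL `|` Csub i j sR `|` Csub i j sB `|` Csub i j sA.

Definition nearest (C : set pt) (z : pt) : set pt :=
  [set c | C c /\ edist z c = dset z C].

Definition Pt (i j : 'I_N) (z : pt) : set pt := nearest (Cpair i j) z.

Definition relax (lam : R) (z p : pt) : pt :=
  ((fun l => z.1 l + lam * (p.1 l - z.1 l)),
   (fun l => z.2 l + lam * (p.2 l - z.2 l))).

Definition Tt (lam : R) (i j : 'I_N) (z : pt) : set pt :=
  [set relax lam z p | p in Pt i j z].

Definition FixT (lam : R) (i j : 'I_N) : set pt := [set z | Tt lam i j z z].

Definition Kt (i j : 'I_N) (z : pt) : set side :=
  [set k | exists p, nearest (Csub i j k) z p /\ Pt i j z p].

Definition desc (i j : 'I_N) (zs : pt) : R :=
  inf [set edist z zs | z in [set z | exists k, Kt i j zs k /\ ~ Csub i j k z]].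

(* d_sep(zs, C_t) = min over k not in K_t(zs) of d(zs, C_{t,k})
   (a finite set, so its infimum is its minimum) *)
Definition dsep (i j : 'I_N) (zs : pt) : R :=
  inf [set dset zs (Csub i j k) | k in ~` Kt i j zs].

End Packing.

(* Main.v *)
Require Import Defs.
From HB Require Import structures.
From mathcomp Require Import all_boot all_order all_algebra.
From mathcomp Require Import all_classical all_reals.
From mathcomp Require Import lra ring.
Import Order.TTheory GRing.Theory Num.Theory.
Local Open Scope ring_scope.
Local Open Scope classical_set_scope.
Set Implicit Arguments. Unset Strict Implicit.

Section Aux.
Variables (R : realType) (N : nat).
Implicit Types (z c a b : pt R N) (S : set (pt R N)).

Lemma edist_ge0 a b : 0 <= edist a b.
Proof. exact: sqrtr_ge0. Qed.

Lemma edist_sym a b : edist a b = edist b a.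
Proof. rewrite /edist; congr Num.sqrt; apply: eq_bigr => l _; ring. Qed.

Lemma edist_self a : edist a a = 0.
Proof.
rewrite /edist big1 ?sqrtr0 // => l _; rewrite !subrr; ring.
Qed.

Lemma dset_lbound z S : has_lbound [set edist z c | c in S].
Proof. by exists 0 => _ [c _ <-]; exact: edist_ge0. Qed.

Lemma dset_le z S c : S c -> dset z S <= edist z c.
Proof. move=> Sc; apply: (ge_inf (dset_lbound z S)); by exists c. Qed.

Lemma dset_ge z S c0 x : S c0 -> (forall c, S c -> x <= edist z c) -> x <= dset z S.
Proof.
move=> Sc0 Hx; apply: lb_le_inf; first by exists (edist z c0), c0.
by move=> _ [c Sc <-]; exact: Hx.
Qed.

Lemma dset_attained z S c : S c -> (forall c', S c' -> edist z c <= edist z c') ->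
  dset z S = edist z c.
Proof.
move=> Sc H; apply/eqP; rewrite eq_le dset_le //=.
exact: (dset_ge Sc).
Qed.

Lemma inf_ge0 (E : set R) : (forall x, E x -> 0 <= x) -> 0 <= inf E.
Proof.
move=> H; have [[x Ex]|E0] := pselect (E !=set0).
  by apply: lb_le_inf; [exists x|].
by rewrite inf_out // => -[].
Qed.

Lemma dset_ge0 z S : 0 <= dset z S.
Proof. by apply: inf_ge0 => _ [c _ <-]; exact: edist_ge0. Qed.

Lemma disc (X Y Z : R) : 0 <= Z -> (forall t, 0 <= X + 2 * t * Y + t ^+ 2 * Z) ->
  Y ^+ 2 <= X * Z.
Proof.
move=> Z0 H; have X0 : 0 <= X by have := H 0; nra.
have [Zp|Ze] := ltP 0 Z.
  set t := - Y / Z; have tZ : t * Z = - Y by rewrite /t; field; rewrite gt_eqF.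
  have := H t; nra.
have Z00 : Z = 0 by apply/eqP; rewrite eq_le Ze Z0.
have [Y0|Yn] := eqVneq Y 0; first by rewrite Y0 Z00; lra.
set t := - (X + 1) / (2 * Y).
have tY : 2 * t * Y = - (X + 1) by rewrite /t; field; rewrite ?Yn ?andbT /=; try lra.
have := H t; rewrite tY Z00; lra.
Qed.

Lemma minkowski (p q r s : 'I_N -> R) :
  Num.sqrt (\sum_(l < N) ((p l + r l) ^+ 2 + (q l + s l) ^+ 2)) <=
  Num.sqrt (\sum_(l < N) (p l ^+ 2 + q l ^+ 2)) + Num.sqrt (\sum_(l < N) (r l ^+ 2 + s l ^+ 2)).
Proof.
set X := \sum_(l < N) (p l ^+ 2 + q l ^+ 2).
set Z := \sum_(l < N) (r l ^+ 2 + s l ^+ 2).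
set Y := \sum_(l < N) (p l * r l + q l * s l).
have X0 : 0 <= X by apply: sumr_ge0 => l _; apply: addr_ge0; exact: sqr_ge0.
have Z0 : 0 <= Z by apply: sumr_ge0 => l _; apply: addr_ge0; exact: sqr_ge0.
have expand : forall t, \sum_(l < N) ((p l + t * r l) ^+ 2 + (q l + t * s l) ^+ 2)
   = X + 2 * t * Y + t ^+ 2 * Z.
  move=> t; rewrite /X /Y /Z !mulr_sumr -!big_split /=.
  by apply: eq_bigr => l _; ring.
have CS : Y ^+ 2 <= X * Z.
  apply: disc => // t; rewrite -expand; apply: sumr_ge0 => l _.
  apply: addr_ge0; exact: sqr_ge0.
have YXZ : Y <= Num.sqrt X * Num.sqrt Z.
  rewrite -sqrtrM //; apply: (le_trans (ler_norm Y)); rewrite -sqrtr_sqr.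
  by rewrite ler_sqrt // mulr_ge0.
have := expand 1; rewrite expr1n !mul1r mulr1.
under eq_bigr do rewrite !mul1r.
move=> ->.
rewrite -[X in _ <= X]ger0_norm ?addr_ge0 ?sqrtr_ge0 // -sqrtr_sqr ler_sqrt ?sqr_ge0 //.
have sX := sqr_sqrtr X0; have sZ := sqr_sqrtr Z0.
rewrite sqrrD sX sZ; lra.
Qed.

Lemma edist_triangle a b c : edist a c <= edist a b + edist b c.
Proof.
have := minkowski (fun l => a.1 l - b.1 l) (fun l => a.2 l - b.2 l)
  (fun l => b.1 l - c.1 l) (fun l => b.2 l - c.2 l).
rewrite /edist /=.
suff -> : \sum_(l < N) ((a.1 l - b.1 l + (b.1 l - c.1 l)) ^+ 2 + (a.2 l - b.2 l + (b.2 l - c.2 l)) ^+ 2)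
  = \sum_(l < N) ((a.1 l - c.1 l) ^+ 2 + (a.2 l - c.2 l) ^+ 2) by [].
by apply: eq_bigr => l _; congr (_ ^+ 2 + _ ^+ 2); ring.
Qed.

Lemma edist_scale a b c d (t : R) :
  (forall l, a.1 l - b.1 l = t * (c.1 l - d.1 l)) ->
  (forall l, a.2 l - b.2 l = t * (c.2 l - d.2 l)) ->
  edist a b = `|t| * edist c d.
Proof.
move=> H1 H2; rewrite /edist -sqrtr_sqr -sqrtrM ?sqr_ge0 //; congr Num.sqrt.
rewrite mulr_sumr; apply: eq_bigr => l _; rewrite H1 H2; ring.
Qed.

End Aux.
Section Proj.
Variable R : realType.

Definition F2 (A B w a b : R) := [/\ 0 <= a <= A, 0 <= b <= B & a + w <= b].

Lemma clamp_exists (C u : R) : 0 <= C -> exists a, 0 <= a <= C /\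
  forall c, 0 <= c <= C -> (u - a) ^+ 2 <= (u - c) ^+ 2.
Proof.
move=> C0; have [u0|u0] := ltP u 0.
  exists 0; split; first by rewrite lexx C0.
  move=> c /andP[c0 cC]; nra.
have [uC|uC] := ltP C u.
  exists C; split; first by rewrite lexx C0.
  move=> c /andP[c0 cC]; nra.
exists u; split; first by rewrite u0 uC.
move=> c _; rewrite subrr expr0n /=; exact: sqr_ge0.
Qed.

Lemma VI_opt (A B w u v a b : R) : F2 A B w a b ->
  (forall c d, F2 A B w c d -> (u - a) * (c - a) + (v - b) * (d - b) <= 0) ->
  forall c d, F2 A B w c d -> (u - a) ^+ 2 + (v - b) ^+ 2 <= (u - c) ^+ 2 + (v - d) ^+ 2.
Proof.
move=> _ H c d Fcd; have := H c d Fcd.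
have := sqr_ge0 (c - a); have := sqr_ge0 (d - b); nra.
Qed.

Lemma P2_exists (A B w u v : R) : 0 < w -> (exists c d, F2 A B w c d) ->
  exists a b, F2 A B w a b /\
  forall c d, F2 A B w c d -> (u - a) ^+ 2 + (v - b) ^+ 2 <= (u - c) ^+ 2 + (v - d) ^+ 2.
Proof.
move=> w0 [c0 [d0 [/andP[c00 c0A] /andP[d00 d0B] cd0]]].
have A0 : 0 <= A by lra.
have wB : w <= B by lra.
suff [a [b [Fab HVI]]] : exists a b, F2 A B w a b /\
  (forall c d, F2 A B w c d -> (u - a) * (c - a) + (v - b) * (d - b) <= 0).
  by exists a, b; split => //; exact: VI_opt Fab HVI.
have feas : forall a b, 0 <= a -> a <= A -> b <= B -> a + w <= b -> F2 A B w a b.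
  move=> a b ? ? ? ?; split => //; apply/andP; split => //; lra.
have [vB|vB] := ltP B v.
  have [u0|u0] := ltP u 0.
    exists 0, B; split; first by apply: feas; lra.
    move=> c d; rewrite /F2 => -[/andP[cc0 cA] /andP[dd0 dB] cd]; nra.
  have [AB|AB] := leP A (B - w).
    have [uA|uA] := ltP A u.
      exists A, B; split; first by apply: feas; lra.
      move=> c d; rewrite /F2 => -[/andP[cc0 cA] /andP[dd0 dB] cd]; nra.
    exists u, B; split; first by apply: feas; lra.
    move=> c d; rewrite /F2 => -[/andP[cc0 cA] /andP[dd0 dB] cd]; nra.
  have [uA|uA] := ltP (B - w) u.
    exists (B - w), B; split; first by apply: feas; lra.
    move=> c d; rewrite /F2 => -[/andP[cc0 cA] /andP[dd0 dB] cd]; nra.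
  exists u, B; split; first by apply: feas; lra.
  move=> c d; rewrite /F2 => -[/andP[cc0 cA] /andP[dd0 dB] cd]; nra.
have [uwv|uwv] := leP (u + w) v.
  have [u0|u0] := ltP u 0.
    have [wv|wv] := leP w v.
      exists 0, v; split; first by apply: feas; lra.
      move=> c d; rewrite /F2 => -[/andP[cc0 cA] /andP[dd0 dB] cd]; nra.
    exists 0, w; split; first by apply: feas; lra.
    move=> c d; rewrite /F2 => -[/andP[cc0 cA] /andP[dd0 dB] cd]; nra.
  have [uA|uA] := ltP A u.
    exists A, v; split; first by apply: feas; lra.
    move=> c d; rewrite /F2 => -[/andP[cc0 cA] /andP[dd0 dB] cd]; nra.
  exists u, v; split; first by apply: feas; lra.
  move=> c d; rewrite /F2 => -[/andP[cc0 cA] /andP[dd0 dB] cd]; nra.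
set s := (u + v - w) / 2.
have sE : 2 * s = u + v - w by rewrite /s; field.
have [s0|s0] := ltP s 0.
  have [wv|wv] := leP w v.
    exists 0, v; split; first by apply: feas; lra.
    move=> c d; rewrite /F2 => -[/andP[cc0 cA] /andP[dd0 dB] cd]; nra.
  exists 0, w; split; first by apply: feas; lra.
  move=> c d; rewrite /F2 => -[/andP[cc0 cA] /andP[dd0 dB] cd]; nra.
have [AB|AB] := leP A (B - w).
  have [sA|sA] := ltP A s.
    have [Awv|Awv] := leP (A + w) v.
      exists A, v; split; first by apply: feas; lra.
      move=> c d; rewrite /F2 => -[/andP[cc0 cA] /andP[dd0 dB] cd]; nra.
    exists A, (A + w); split; first by apply: feas; lra.
    move=> c d; rewrite /F2 => -[/andP[cc0 cA] /andP[dd0 dB] cd]; nra.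
  exists s, (s + w); split; first by apply: feas; lra.
  move=> c d; rewrite /F2 => -[/andP[cc0 cA] /andP[dd0 dB] cd]; nra.
have [sA|sA] := ltP (B - w) s.
  exists (B - w), B; split; first by apply: feas; lra.
  move=> c d; rewrite /F2 => -[/andP[cc0 cA] /andP[dd0 dB] cd]; nra.
exists s, (s + w); split; first by apply: feas; lra.
move=> c d; rewrite /F2 => -[/andP[cc0 cA] /andP[dd0 dB] cd]; nra.
Qed.

End Proj.
Section Near.
Variables (R : realType) (N : nat).

Lemma sum_split2 (F : 'I_N -> R) (i j : 'I_N) : i != j ->
  \sum_(l < N) F l = F i + F j + \sum_(l < N | (l != i) && (l != j)) F l.
Proof.
move=> ij; rewrite (bigD1 i) //= (bigD1 j) /= ?(eq_sym j) ?ij // addrA.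
by congr (_ + _ + _); apply: eq_bigl => l.
Qed.

Lemma near_exists (S : set (pt R N)) (i j : 'I_N) (G : R -> R -> R -> R -> Prop) (z : pt R N) :
  i != j -> (forall c, S c <-> G (c.1 i) (c.1 j) (c.2 i) (c.2 j)) ->
  (exists a1 a2 a3 a4, G a1 a2 a3 a4 /\ forall b1 b2 b3 b4, G b1 b2 b3 b4 ->
     (z.1 i - a1) ^+ 2 + (z.1 j - a2) ^+ 2 + (z.2 i - a3) ^+ 2 + (z.2 j - a4) ^+ 2 <=
     (z.1 i - b1) ^+ 2 + (z.1 j - b2) ^+ 2 + (z.2 i - b3) ^+ 2 + (z.2 j - b4) ^+ 2) ->
  exists p, nearest S z p.
Proof.
move=> ij HS [a1 [a2 [a3 [a4 [Ga Hmin]]]]].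
pose p : pt R N := ((fun l => if l == i then a1 else if l == j then a2 else z.1 l),
   (fun l => if l == i then a3 else if l == j then a4 else z.2 l)).
have ji : (j == i) = false by rewrite eq_sym; apply/negbTE.
have Sp : S p by apply/HS; rewrite /p /= eqxx ji eqxx.
exists p; split => //; symmetry; apply: dset_attained => // c Sc.
rewrite /edist ler_sqrt; last by apply: sumr_ge0 => l _; apply: addr_ge0; exact: sqr_ge0.
rewrite (sum_split2 (fun l => (z.1 l - p.1 l) ^+ 2 + (z.2 l - p.2 l) ^+ 2) ij).
rewrite (sum_split2 (fun l => (z.1 l - c.1 l) ^+ 2 + (z.2 l - c.2 l) ^+ 2) ij).
apply: lerD.
  rewrite /p /= eqxx ji eqxx.
  have := Hmin _ _ _ _ (proj1 (HS c) Sc); lra.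
apply: ler_sum => l /andP[li lj]; rewrite /p /= (negbTE li) (negbTE lj) !subrr expr0n /= add0r.
apply: addr_ge0; exact: sqr_ge0.
Qed.

Lemma Csub_near (W H : R) (w h : 'I_N -> R) (i j : 'I_N) (k : side) (z : pt R N) :
  i != j -> 0 < w i -> 0 < w j -> 0 < h i -> 0 < h j ->
  Csub W H w h i j k !=set0 -> exists p, nearest (Csub W H w h i j k) z p.
Proof.
move=> ij wi wj hi hj [c0 Sc0]; case: k Sc0 => Sc0.
- apply: (@near_exists _ i j (fun a1 a2 a3 a4 => F2 (W - w i) (W - w j) (w i) a1 a2 /\ 0 <= a3 <= H - h i /\ 0 <= a4 <= H - h j) z ij).
    move=> c; rewrite /Csub /Ox /Oy /Defs.Bij /Bx /By /setI /F2 /=.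
    by split => [[o [[[bxi byi] bxj] byj]] | [[bxi bxj o] [byi byj]]].
  move: Sc0; rewrite /Csub /Ox /Oy /Defs.Bij /Bx /By /setI /=.
  move=> [o [[[/andP[x1 x2] /andP[y1 y2]] /andP[x3 x4]] /andP[y3 y4]]].
  have [a1 [a2 [Fa Ha]]] : exists a1 a2, F2 (W - w i) (W - w j) (w i) a1 a2 /\
    forall c d, F2 (W - w i) (W - w j) (w i) c d -> (z.1 i - a1) ^+ 2 + (z.1 j - a2) ^+ 2 <= (z.1 i - c) ^+ 2 + (z.1 j - d) ^+ 2.
    apply: P2_exists => //; exists (c0.1 i), (c0.1 j); split => //; apply/andP; split => //.
  have [a3 [Fa3 Ha3]] := @clamp_exists _ (H - h i) (z.2 i) (le_trans y1 y2).
  have [a4 [Fa4 Ha4]] := @clamp_exists _ (H - h j) (z.2 j) (le_trans y3 y4).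
  exists a1, a2, a3, a4; split => // b1 b2 b3 b4 [Fb [Fb3 Fb4]].
  { have := Ha _ _ Fb; have := Ha3 _ Fb3; have := Ha4 _ Fb4; lra. }
- apply: (@near_exists _ i j (fun a1 a2 a3 a4 => F2 (W - w j) (W - w i) (w j) a2 a1 /\ 0 <= a3 <= H - h i /\ 0 <= a4 <= H - h j) z ij).
    move=> c; rewrite /Csub /Ox /Oy /Defs.Bij /Bx /By /setI /F2 /=.
    by split => [[o [[[bxi byi] bxj] byj]] | [[bxj bxi o] [byi byj]]].
  move: Sc0; rewrite /Csub /Ox /Oy /Defs.Bij /Bx /By /setI /=.
  move=> [o [[[/andP[x1 x2] /andP[y1 y2]] /andP[x3 x4]] /andP[y3 y4]]].
  have [a1 [a2 [Fa Ha]]] : exists a1 a2, F2 (W - w j) (W - w i) (w j) a1 a2 /\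
    forall c d, F2 (W - w j) (W - w i) (w j) c d -> (z.1 j - a1) ^+ 2 + (z.1 i - a2) ^+ 2 <= (z.1 j - c) ^+ 2 + (z.1 i - d) ^+ 2.
    apply: P2_exists => //; exists (c0.1 j), (c0.1 i); split => //; apply/andP; split => //.
  have [a3 [Fa3 Ha3]] := @clamp_exists _ (H - h i) (z.2 i) (le_trans y1 y2).
  have [a4 [Fa4 Ha4]] := @clamp_exists _ (H - h j) (z.2 j) (le_trans y3 y4).
  exists a2, a1, a3, a4; split => // b1 b2 b3 b4 [Fb [Fb3 Fb4]].
  { have := Ha _ _ Fb; have := Ha3 _ Fb3; have := Ha4 _ Fb4; lra. }
- apply: (@near_exists _ i j (fun a1 a2 a3 a4 => F2 (H - h i) (H - h j) (h i) a3 a4 /\ 0 <= a1 <= W - w i /\ 0 <= a2 <= W - w j) z ij).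
    move=> c; rewrite /Csub /Ox /Oy /Defs.Bij /Bx /By /setI /F2 /=.
    by split => [[o [[[bxi byi] bxj] byj]] | [[byi byj o] [bxi bxj]]].
  move: Sc0; rewrite /Csub /Ox /Oy /Defs.Bij /Bx /By /setI /=.
  move=> [o [[[/andP[x1 x2] /andP[y1 y2]] /andP[x3 x4]] /andP[y3 y4]]].
  have [a1 [a2 [Fa Ha]]] : exists a1 a2, F2 (H - h i) (H - h j) (h i) a1 a2 /\
    forall c d, F2 (H - h i) (H - h j) (h i) c d -> (z.2 i - a1) ^+ 2 + (z.2 j - a2) ^+ 2 <= (z.2 i - c) ^+ 2 + (z.2 j - d) ^+ 2.
    apply: P2_exists => //; exists (c0.2 i), (c0.2 j); split => //; apply/andP; split => //.
  have [a3 [Fa3 Ha3]] := @clamp_exists _ (W - w i) (z.1 i) (le_trans x1 x2).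
  have [a4 [Fa4 Ha4]] := @clamp_exists _ (W - w j) (z.1 j) (le_trans x3 x4).
  exists a3, a4, a1, a2; split => // b1 b2 b3 b4 [Fb [Fb3 Fb4]].
  { have := Ha _ _ Fb; have := Ha3 _ Fb3; have := Ha4 _ Fb4; lra. }
- apply: (@near_exists _ i j (fun a1 a2 a3 a4 => F2 (H - h j) (H - h i) (h j) a4 a3 /\ 0 <= a1 <= W - w i /\ 0 <= a2 <= W - w j) z ij).
    move=> c; rewrite /Csub /Ox /Oy /Defs.Bij /Bx /By /setI /F2 /=.
    by split => [[o [[[bxi byi] bxj] byj]] | [[byj byi o] [bxi bxj]]].
  move: Sc0; rewrite /Csub /Ox /Oy /Defs.Bij /Bx /By /setI /=.
  move=> [o [[[/andP[x1 x2] /andP[y1 y2]] /andP[x3 x4]] /andP[y3 y4]]].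
  have [a1 [a2 [Fa Ha]]] : exists a1 a2, F2 (H - h j) (H - h i) (h j) a1 a2 /\
    forall c d, F2 (H - h j) (H - h i) (h j) c d -> (z.2 j - a1) ^+ 2 + (z.2 i - a2) ^+ 2 <= (z.2 j - c) ^+ 2 + (z.2 i - d) ^+ 2.
    apply: P2_exists => //; exists (c0.2 j), (c0.2 i); split => //; apply/andP; split => //.
  have [a3 [Fa3 Ha3]] := @clamp_exists _ (W - w i) (z.1 i) (le_trans x1 x2).
  have [a4 [Fa4 Ha4]] := @clamp_exists _ (W - w j) (z.1 j) (le_trans x3 x4).
  exists a3, a4, a2, a1; split => // b1 b2 b3 b4 [Fb [Fb3 Fb4]].
  { have := Ha _ _ Fb; have := Ha3 _ Fb3; have := Ha4 _ Fb4; lra. }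
Qed.
End Near.
Lemma Cpair_in (R : realType) (N : nat) (W H : R) (w h : 'I_N -> R) i j k (c : pt R N) :
  Csub W H w h i j k c -> Cpair W H w h i j c.
Proof. by case: k => Hc; [left; left; left | left; left; right | left; right | right]. Qed.

Lemma Cpair_out (R : realType) (N : nat) (W H : R) (w h : 'I_N -> R) i j (c : pt R N) :
  Cpair W H w h i j c -> exists k, Csub W H w h i j k c.
Proof. move=> [[[Hc|Hc]|Hc]|Hc]; [exists sL|exists sR|exists sB|exists sA]; exact: Hc. Qed.

Theorem mainTheorem5 (R : realType) (N Nm : nat) (W H : R)
  (w h : 'I_N -> R) (lam : R) (i j : 'I_N) (zs : pt R N) :
  0 < W -> 0 < H -> (2 <= Nm)%N -> (Nm <= N)%N ->
  (forall l : 'I_N, (l < Nm)%N -> 0 < w l /\ 0 < h l) ->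
  (forall (a b : 'I_N) (k : side), (a < b)%N -> (b < Nm)%N ->
      Csub W H w h a b k !=set0) ->
  0 < lam < 2 ->
  (i < j)%N -> (j < Nm)%N ->
  FixT W H w h lam i j zs ->
  (exists k0 : side, Kt W H w h i j zs = [set k0]) ->
  let ds := dsep W H w h i j zs in
  let de := desc W H w h i j zs in
  let r := Num.min ds ((ds + de) / 2) in
  forall z : pt R N, oball zs r z -> Kt W H w h i j z = Kt W H w h i j zs.
Proof.
move=> W0 H0 hNm NmN whpos Cne /andP[lam0 lam2] ij jNm Fix [k0 Kzs] ds de r z zball.
have ijn : i != j by apply/eqP => e; move: ij; rewrite e ltnn.
have iNm : (i < Nm)%N by apply: ltn_trans jNm.
have [wi hi] := whpos i iNm.
have [wj hj] := whpos j jNm.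
have near : forall k y, exists p, nearest (Csub W H w h i j k) y p.
  by move=> k y; apply: Csub_near => //; apply: Cne.
have Ck0 : Csub W H w h i j k0 zs.
  case: Fix => p Pp Hrel.
  have pE : p = zs.
    rewrite [p]surjective_pairing [zs]surjective_pairing; congr pair; apply: funext => l.
      have E := congr1 (fun f => f.1 l) Hrel; rewrite /relax /= in E.
      have : (p.1 l - zs.1 l) * lam = 0 by lra.
      by move/eqP; rewrite mulf_eq0 (gt_eqF lam0) orbF subr_eq0 => /eqP.
    have E := congr1 (fun f => f.2 l) Hrel; rewrite /relax /= in E.
    have : (p.2 l - zs.2 l) * lam = 0 by lra.
    by move/eqP; rewrite mulf_eq0 (gt_eqF lam0) orbF subr_eq0 => /eqP.
  rewrite pE in Pp.
  have [k Ck] := Cpair_out (proj1 Pp).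
  have Kk : Kt W H w h i j zs k.
    exists zs; split => //; split => //; symmetry; apply: dset_attained => // c' _.
    by rewrite edist_self; exact: edist_ge0.
  by move: Kk; rewrite Kzs => e; rewrite -e.
have dsk : forall k, k <> k0 -> ds <= dset zs (Csub W H w h i j k).
  move=> k nk; apply: ge_inf.
    by exists 0 => _ [k' _ <-]; exact: dset_ge0.
  by exists k => //; rewrite /setC /= Kzs.
have deout : forall y, ~ Csub W H w h i j k0 y -> de <= edist y zs.
  move=> y ny; apply: ge_inf.
    by exists 0 => _ [y' _ <-]; exact: edist_ge0.
  by exists y => //; exists k0; rewrite Kzs.
have de0 : 0 <= de by apply: inf_ge0 => _ [y' _ <-]; exact: edist_ge0.
have ds0 : 0 <= ds by apply: inf_ge0 => _ [k' _ <-]; exact: dset_ge0.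
set d := edist zs z.
have d0 : 0 <= d := edist_ge0 _ _.
have [dds dde] : d < ds /\ d < (ds + de) / 2.
  by move: zball; rewrite /oball /= -/d /r lt_min => /andP[].
have lowk : forall k, k <> k0 -> ds - d <= dset z (Csub W H w h i j k).
  move=> k nk; have [c Cc] := Cne i j k ij jNm.
  apply: (dset_ge Cc) => c' Cc'.
  have := edist_triangle zs z c'; have := dsk k nk; have := dset_le zs Cc'; rewrite -/d; lra.
have up0 : exists q, Csub W H w h i j k0 q /\ edist z q < ds - d.
  have [dlt|dge] := ltP d de.
    exists z; split; last by rewrite edist_self; lra.
    apply: contrapT => nz; have := deout z nz; rewrite edist_sym -/d; lra.
  have [d2|d2] := ltP (2 * d) ds.
    by exists zs; split => //; rewrite edist_sym -/d; lra.
  have dpos : 0 < d by lra.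
  set t := (2 * d - ds + de) / (2 * d).
  have td : t * d = (2 * d - ds + de) / 2 by rewrite /t; field; rewrite gt_eqF.
  have t0 : 0 <= t by rewrite /t divr_ge0 //; lra.
  have t1 : t <= 1 by rewrite /t ler_pdivrMr ?mul1r; lra.
  pose q : pt R N := ((fun l => zs.1 l + t * (z.1 l - zs.1 l)),
                      (fun l => zs.2 l + t * (z.2 l - zs.2 l))).
  have eq1 : edist q zs = `|t| * edist z zs by apply: edist_scale => l /=; ring.
  have eq2 : edist z q = `|1 - t| * edist z zs by apply: edist_scale => l /=; ring.
  rewrite [edist z zs]edist_sym -/d ger0_norm // in eq1.
  rewrite [edist z zs]edist_sym -/d ger0_norm in eq2; last by lra.
  exists q; split.
    apply: contrapT => nq; have := deout q nq; rewrite eq1 td; lra.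
  rewrite eq2 mulrBl mul1r td; lra.
have key : forall k, k <> k0 -> dset z (Csub W H w h i j k0) < dset z (Csub W H w h i j k).
  move=> k nk; have [q [Cq qd]] := up0.
  exact: (le_lt_trans (dset_le z Cq) (lt_le_trans qd (lowk k nk))).
have [p0 [Cp0 p0d]] := near k0 z.
have Pp0 : Pt W H w h i j z p0.
  split; first exact: Cpair_in Cp0.
  symmetry; apply: dset_attained; first exact: Cpair_in Cp0.
  move=> c /Cpair_out [k Ck].
  have [ek|nk] := pselect (k = k0).
    by rewrite p0d; apply: dset_le; rewrite -ek.
  rewrite p0d; apply: ltW; apply: (lt_le_trans (key k nk)); exact: dset_le.
rewrite Kzs; apply/seteqP; split => k.
  move=> [p [[Ckp pd] [Cpp pp]]]; apply: contrapT => nk.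
  have := key k nk; rewrite -pd -p0d pp; have := dset_le z Cp0 => _.
  have := dset_le z (Cpair_in Cp0); lra.
move=> ->; exists p0; split => //.
Qed.
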